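(* Let $G=(g_1,\dots,g_k)\in\mathbb{N}_0^k$ be telescopic with $g_1>0$ and $c(G)=(c_2,\dots,c_k)$, and suppose $g_n=c_mg_m$ for some $m,n$ with $1<n<m\le k$. Then the sequence $$H=(g_1,\dots,g_{n-1},\,g_m,\,g_{n+1},\dots,g_{m-1},\,g_{m+1},\dots,g_k)\in\mathbb{N}_0^{k-1}$$ (obtained by swapping the $n$th and $m$th entries of $G$ and then deleting the $m$th entry) is telescopic and satisfies $\langle H\rangle=\langle G\rangle$.
   Context: $\langle\cdot\rangle$ denotes the set of $\mathbb{N}_0$-linear combinations. $G_i=(g_1,\dots,g_i)$, $d_i=\gcd(G_i)$, $c_j=d_{j-1}/d_j$; a sequence $G$ with $g_1>0$ is telescopic if $c_jg_j\in\langle G_{j-1}\rangle$ for all $2\le j\le k$. *)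

(* Defs.v *)
From mathcomp Require Import all_boot.
Set Implicit Arguments. Unset Strict Implicit. Unset Printing Implicit Defensive.

(* Sequences G = (g_1,...,g_k) are [seq nat]; g_i is [gi G i] (1-indexed). *)
Definition gi (G : seq nat) (i : nat) : nat := nth 0 G i.-1.

Definition Gpre (G : seq nat) (i : nat) : seq nat := take i G.

(* d_i = gcd(G_i)  (gcd of the empty sequence is 0) *)
Definition dgcd (G : seq nat) (i : nat) : nat := \big[gcdn/0]_(x <- Gpre G i) x.

Definition cc (G : seq nat) (j : nat) : nat := dgcd G j.-1 %/ dgcd G j.

Definition in_semigroup (S : seq nat) (x : nat) : Prop :=
  exists a : seq nat, size a = size S /\
    x = \sum_(i < size S) nth 0 a i * nth 0 S i.

Definition telescopic (G : seq nat) : Prop :=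
  0 < gi G 1 /\ 0 < size G /\
  forall j, 2 <= j <= size G -> in_semigroup (Gpre G j.-1) (cc G j * gi G j).

Definition swap_del (G : seq nat) (n m : nat) : seq nat :=
  take n.-1 G ++ gi G m :: take (m.-1 - n) (drop n G) ++ drop m G.

(* Main.v *)
Require Import Defs.
From mathcomp Require Import all_boot zify.

Lemma sg_nil x : in_semigroup [::] x <-> x = 0.
Proof.
split.
- by case=> a [_ ->]; rewrite big_ord0.
- by move=> ->; exists [::]; rewrite big_ord0.
Qed.

Lemma sg_cons s S x :
  in_semigroup (s :: S) x <-> exists a y, in_semigroup S y /\ x = a * s + y.
Proof.
split.
- case=> a [Ha ->]; rewrite /= big_ord_recl /=.
  exists (nth 0 a 0), (\sum_(i < size S) nth 0 a (bump 0 i) * nth 0 S i).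
  split=> //; exists (behead a); split; first by rewrite size_behead Ha.
  by apply: eq_bigr => i _; rewrite nth_behead.
- case=> b [y [[a [Ha ->]] ->]].
  exists (b :: a); split; first by rewrite /= Ha.
  by rewrite /= big_ord_recl.
Qed.

Lemma sg0 S : in_semigroup S 0.
Proof.
elim: S => [|s S IH]; first by apply/sg_nil.
by apply/sg_cons; exists 0, 0.
Qed.

Lemma sgD S x y : in_semigroup S x -> in_semigroup S y -> in_semigroup S (x + y).
Proof.
elim: S x y => [|s S IH] x y.
- by move=> /sg_nil -> /sg_nil ->; apply/sg_nil.
- move=> /sg_cons [a [x' [Hx ->]]] /sg_cons [b [y' [Hy ->]]].
  apply/sg_cons; exists (a + b), (x' + y'); split; first exact: IH.
  by rewrite mulnDl -!addnA (addnCA x').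
Qed.

Lemma sgM S k x : in_semigroup S x -> in_semigroup S (k * x).
Proof.
move=> Hx; elim: k => [|k IH]; first by rewrite mul0n; apply: sg0.
by rewrite mulSn; apply: sgD.
Qed.

Lemma sg_mem S y : y \in S -> in_semigroup S y.
Proof.
elim: S => [|s S IH] //; rewrite inE => /orP [/eqP ->|Hy].
- by apply/sg_cons; exists 1, 0; split; [apply: sg0 | rewrite mul1n addn0].
- by apply/sg_cons; exists 0, y; split; [apply: IH|].
Qed.

Lemma sg_sub S T : (forall y, y \in S -> in_semigroup T y) ->
  forall x, in_semigroup S x -> in_semigroup T x.
Proof.
elim: S => [|s S IH] HS x.
- by move=> /sg_nil ->; apply: sg0.
- move=> /sg_cons [a [y [Hy ->]]]; apply: sgD.
  + by apply: sgM; apply: HS; rewrite inE eqxx.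
  + by apply: IH => // z Hz; apply: HS; rewrite inE Hz orbT.
Qed.
Definition gcdl (L : seq nat) : nat := \big[gcdn/0]_(x <- L) x.

Lemma gcdl_cons x L : gcdl (x :: L) = gcdn x (gcdl L).
Proof. by rewrite /gcdl big_cons. Qed.

Lemma gcdl_nil : gcdl [::] = 0.
Proof. by rewrite /gcdl big_nil. Qed.

Lemma gcdl_mid X z Y : gcdl (X ++ z :: Y) = gcdn z (gcdl (X ++ Y)).
Proof.
elim: X => [|x X IH] /=; first by rewrite gcdl_cons.
by rewrite !gcdl_cons IH gcdnCA.
Qed.

Lemma gcdl_rcons X z : gcdl (X ++ [:: z]) = gcdn (gcdl X) z.
Proof. by rewrite gcdl_mid cats0 gcdnC. Qed.

Lemma dvdn_gcdl_all d L : (d %| gcdl L) = all (fun x => d %| x) L.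
Proof.
elim: L => [|x L IH] /=; first by rewrite gcdl_nil dvdn0.
by rewrite gcdl_cons dvdn_gcd IH.
Qed.

Lemma cat_cons_split (P R X Y : seq nat) s : P ++ s :: R = X ++ Y ->
  (exists R', X = P ++ s :: R' /\ R = R' ++ Y) \/
  (exists P', P = X ++ P' /\ Y = P' ++ s :: R).
Proof.
elim: X P => [|x X IH] P /=; first by move=> <-; right; exists P.
case: P => [|p P] /= [<-] E.
- by left; exists X; rewrite E.
- case: (IH P E) => [[R' [-> ->]]|[P' [-> ->]]].
  + by left; exists R'.
  + by right; exists P'.
Qed.

Definition cond (P : seq nat) (s : nat) : Prop :=
  in_semigroup P ((gcdl P %/ gcdn (gcdl P) s) * s).

Lemma dec_facts S P s R : S = P ++ s :: R ->
  [/\ Gpre S (size P) = P, gi S (size P).+1 = s &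
      cc S (size P).+1 = gcdl P %/ gcdn (gcdl P) s].
Proof.
move=> E; subst S; split.
- by rewrite /Gpre take_size_cat.
- by rewrite /gi /= nth_cat ltnn subnn.
- rewrite /cc /dgcd /Gpre /= take_size_cat // -/(gcdl P).
  rewrite take_cat ltnNge leqnSn /= subSn // subnn /= take0 -/(gcdl _).
  by rewrite gcdl_rcons.
Qed.

Lemma tel_cond S P s R : telescopic S -> S = P ++ s :: R -> 0 < size P -> cond P s.
Proof.
move=> [_ [_ H]] E HP.
have [E1 E2 E3] := @dec_facts _ _ _ _ E.
have := H (size P).+1; rewrite /= E1 E2 E3; apply.
by rewrite ltnS HP E size_cat /= addnS ltnS leq_addr.
Qed.

Lemma cond_tel S : 0 < gi S 1 -> 0 < size S ->
  (forall P s R, S = P ++ s :: R -> 0 < size P -> cond P s) -> telescopic S.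
Proof.
move=> H1 H2 H; split=> //; split=> // j /andP [Hj1 Hj2].
have Hlt : j.-1 < size S by rewrite prednK ?(leq_trans _ Hj1).
have E : S = take j.-1 S ++ nth 0 S j.-1 :: drop j S.
  have Ej : j = j.-1.+1 by rewrite prednK // (leq_trans _ Hj1).
  by rewrite [in drop j S]Ej -(drop_nth 0 Hlt) cat_take_drop.
have [E1 E2 E3] := @dec_facts _ _ _ _ E.
have Hs : size (take j.-1 S) = j.-1 by rewrite size_take Hlt.
rewrite Hs prednK in E1 E2 E3; last by rewrite (leq_trans _ Hj1).
rewrite E1 E2 E3; apply: (H _ _ _ E).
by rewrite Hs -ltnS prednK // (leq_trans _ Hj1).
Qed.

Lemma gcdl_cat X Y : gcdl (X ++ Y) = gcdn (gcdl X) (gcdl Y).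
Proof. by rewrite /gcdl big_cat. Qed.

Lemma sg_sub2 S T z : (forall y, y \in S -> y \in T \/ y = z) -> in_semigroup T z ->
  forall x, in_semigroup S x -> in_semigroup T x.
Proof.
move=> H Hz; apply: sg_sub => y /H [Hy|->] //; exact: sg_mem.
Qed.

Lemma main_gen A B1 B2 gn e :
  telescopic (A ++ gn :: B1 ++ e :: B2) -> 0 < size A ->
  gn = (gcdl (A ++ gn :: B1) %/ gcdn (gcdl (A ++ gn :: B1)) e) * e ->
  telescopic (A ++ e :: B1 ++ B2) /\
  (forall x, in_semigroup (A ++ e :: B1 ++ B2) x <->
             in_semigroup (A ++ gn :: B1 ++ e :: B2) x).
Proof.
move=> HT HA.
have Ha : 0 < gcdl A.
  case: A HA HT => [|x A'] //= _ [H1 _].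
  by rewrite gcdl_cons gcdn_gt0 -[x]/(gi ((x :: A') ++ gn :: B1 ++ e :: B2) 1) H1.
pose D := gcdl (A ++ gn :: B1).
have HDall : all (fun x => D %| x) (A ++ gn :: B1) by rewrite -dvdn_gcdl_all dvdnn.
have HD0 : 0 < D by rewrite /D gcdl_cat gcdn_gt0 Ha.
pose g := gcdn D e.
have Hg0 : 0 < g by rewrite /g gcdn_gt0 HD0.
pose c := D %/ g.
have HDc : D = c * g by rewrite /c divnK // /g dvdn_gcdl.
have Hc0 : 0 < c by move: HD0; rewrite HDc muln_gt0 => /andP [].
pose e' := e %/ g.
have He : e = e' * g by rewrite /e' divnK // /g dvdn_gcdr.
have Hcop : coprime e' c.
  rewrite /coprime gcdnC; apply/eqP.
  have : g = gcdn c e' * g by rewrite muln_gcdl -He -HDc.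
  by move/eqP; rewrite -{1}(mul1n g) eqn_pmul2r // => /eqP <-.
rewrite -/D -/g -/c => Hgn.
clearbody D g c e'.
have key : forall Q, D %| Q -> gcdn Q gn = c * gcdn Q e.
  move=> Q /divnK <-; rewrite Hgn HDc He.
  rewrite mulnA (mulnC _ c) mulnA -!muln_gcdl -muln_gcdr.
  by rewrite [gcdn (c * _) _]gcdnC Gauss_gcdr // gcdnC mulnA.
have HeA : forall Y, forall x, in_semigroup (A ++ gn :: Y) x -> in_semigroup (A ++ e :: Y) x.
  move=> Y; apply: (@sg_sub2 _ _ gn).
  - move=> y; rewrite !(mem_cat, inE) => /orP [H|/orP [/eqP ->|H]];
      [left|right|left]; rewrite ?H ?orbT //.
  - by rewrite Hgn; apply: sgM; apply: sg_mem; rewrite mem_cat inE eqxx orbT.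
have HeB : forall Q x, in_semigroup (A ++ gn :: B1 ++ e :: Q) x ->
                  in_semigroup (A ++ e :: B1 ++ Q) x.
  move=> Q; apply: (@sg_sub2 _ _ gn).
  - move=> y; rewrite !(mem_cat, inE) => /orP [H|/orP [/eqP ->|/orP [H|/orP [H|H]]]];
      [left|right|left|left|left]; rewrite ?H ?orbT //.
  - by rewrite Hgn; apply: sgM; apply: sg_mem; rewrite mem_cat inE eqxx orbT.
split; last first.
  move=> x; split; last exact: HeB.
  apply: sg_sub => y Hy; apply: sg_mem; move: Hy.
  by rewrite !(mem_cat, inE) => /orP [H|/orP [H|/orP [H|H]]]; rewrite ?H ?orbT.
have HDA : all (fun x => D %| x) A by move: HDall; rewrite all_cat => /andP [].
apply: cond_tel.
- by case: A HA HT {HeA HeB HDall HDA Ha} => [|x A'] // _ [H1 _].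
- by rewrite size_cat addn_gt0 HA.
move=> P s R E HP.
have [[R' [EA ER]]|[P' [EP EY]]] := @cat_cons_split _ _ _ _ _ (esym E).
  apply: (@tel_cond _ P s (R' ++ gn :: B1 ++ e :: B2) HT) HP.
  by rewrite EA -catA.
case: P' EP EY => [|p P0] EP /= [Ep EY].
  subst s; rewrite cats0 in EP; subst P.
  have := @tel_cond _ A gn (B1 ++ e :: B2) HT (erefl _) HA; rewrite /cond.
  have Hda : D %| gcdl A by rewrite dvdn_gcdl_all.
  rewrite key // Hgn.
  have Hch : c * gcdn (gcdl A) e %| gcdl A by rewrite -key // dvdn_gcdl.
  have Hh0 : 0 < gcdn (gcdl A) e by rewrite gcdn_gt0 Ha.
  move: Hch => /dvdnP [t Ht].
  move: Hh0 Ht; set h := gcdn (gcdl A) e => Hh0 Ht.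
  have Hch0 : 0 < c * h by rewrite muln_gt0 Hc0.
  rewrite Ht (mulnK _ Hch0) [t * (c * h)]mulnA (mulnK _ Hh0) mulnA; exact.
subst p P.
have [[R' [EB ER]]|[Q [EQ EB2]]] := @cat_cons_split _ _ _ _ _ (esym EY).
  subst B1.
  have := @tel_cond _ (A ++ gn :: P0) s (R' ++ e :: B2) HT.
  rewrite -catA /= -catA /=; move/(_ erefl) => H.
  have /H : 0 < size (A ++ gn :: P0) by rewrite size_cat addn_gt0 HA.
  rewrite /cond !gcdl_mid.
  move: HDall; rewrite all_cat /= all_cat /= => /and3P [HA' _ /andP [HP0 /andP [Hs _]]].
  have Hy0 : D %| gcdl (A ++ P0) by rewrite dvdn_gcdl_all all_cat HA'.
  have Hy1 : D %| gcdn (gcdl (A ++ P0)) s by rewrite dvdn_gcd Hy0.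
  rewrite (gcdnC gn) [gcdn (gcdn _ gn) s]gcdnAC (key _ Hy1) (key _ Hy0) divnMl //.
  rewrite (gcdnC e) gcdnAC; exact: HeA.
subst P0 B2.
have := @tel_cond _ (A ++ gn :: B1 ++ e :: Q) s R HT.
rewrite -catA /= -catA /=; move/(_ erefl) => H.
have /H : 0 < size (A ++ gn :: B1 ++ e :: Q) by rewrite size_cat addn_gt0 HA.
rewrite /cond gcdl_mid catA gcdl_mid -catA gcdl_mid gcdnA.
have -> : gcdn gn e = e by rewrite Hgn gcdnC; apply/gcdn_idPl; apply: dvdn_mull.
move=> H'; exact: HeB.
Qed.

Theorem mainTheorem17 (G : seq nat) (n m : nat) :
  telescopic G ->
  1 < n -> n < m -> m <= size G ->
  gi G n = cc G m * gi G m ->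
  telescopic (swap_del G n m) /\
  (forall x, in_semigroup (swap_del G n m) x <-> in_semigroup G x).
Proof.
move=> HT Hn Hnm HmG Hc.
set A := take n.-1 G.
set gn := nth 0 G n.-1.
set B1 := take (m.-1 - n) (drop n G).
set e := gi G m.
set B2 := drop m G.
have Hn1 : n.-1 < size G by lia.
have Hm1 : m.-1 < size G by lia.
have EnS : n = n.-1.+1 by lia.
have EmS : m = m.-1.+1 by lia.
have Hnm' : n <= m.-1 by lia.
have EG : G = A ++ gn :: B1 ++ e :: B2.
  rewrite /A /gn /B1 /e /B2 /gi.
  rewrite -{1}(cat_take_drop n.-1 G) (drop_nth 0 Hn1) -EnS.
  congr (_ ++ _ :: _).
  rewrite -{1}(cat_take_drop (m.-1 - n) (drop n G)) drop_drop subnK //.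
  by rewrite (drop_nth 0 Hm1) -EmS.
have HsA : size A = n.-1 by rewrite /A size_take Hn1.
have HsB1 : size B1 = m.-1 - n.
  rewrite /B1 size_takel // size_drop; lia.
have Hgn : gn = (gcdl (A ++ gn :: B1) %/ gcdn (gcdl (A ++ gn :: B1)) e) * e.
  have EG' : G = (A ++ gn :: B1) ++ e :: B2 by rewrite -catA.
  have [_ E2 E3] := @dec_facts _ _ _ _ EG'.
  have Hsz : (size (A ++ gn :: B1)).+1 = m.
    rewrite size_cat /= HsA HsB1; lia.
  rewrite Hsz in E2 E3; rewrite -E3 -E2 -Hc /gi.
  have EG'' : G = A ++ gn :: (B1 ++ e :: B2) by [].
  have [_ F2 _] := @dec_facts _ _ _ _ EG''.
  by rewrite HsA -EnS in F2; rewrite /gi in F2.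
have HA : 0 < size A by rewrite HsA; lia.
rewrite EG in HT.
have := @main_gen A B1 B2 gn e HT HA Hgn.
by rewrite [in X in _ -> _ /\ (forall x, _ <-> in_semigroup X x)]EG.
Qed.
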